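(* Let $E$ be a vector bundle of rank $r$ on a variety $X$ and $k\geq 0$. Then for all $d$, $$s_k(\mathrm{Sym}^d(E))=\sum_{|\lambda|=k}p_\lambda(d)\,c_\lambda(E),$$ where the sum runs over the partitions $\lambda=(\lambda_1,\dots,\lambda_l)$ of $k$, $c_\lambda(E):=c_{\lambda_1}(E)\cdots c_{\lambda_l}(E)$, and each $p_\lambda(d)$ is a polynomial in $d$ (with rational coefficients, independent of $E$ and $X$) of degree $\leq rk$; moreover there exists $\lambda$ with $p_\lambda$ of degree exactly $rk$.
   Context: $s_k$ denotes the $k$-th Segre class, with the convention that the total Segre class is the inverse of the total Chern class: $s(E)=c(E)^{-1}$. *)

(* Defs.v *)
From HB Require Import structures.
From mathcomp Require Import all_boot all_order all_algebra.
From mathcomp Require Import mpoly.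
Set Implicit Arguments. Unset Strict Implicit. Unset Printing Implicit Defensive.
Import GRing.Theory.
Local Open Scope ring_scope.

(* Universal (splitting principle) model of a rank r bundle E:
   Chern roots x_1..x_r = 'X_i in {mpoly rat[r]}, so c_i(E) = mesym r i
   (which is 0 for i > r). *)
Definition chernE (r i : nat) : {mpoly rat[r]} := mesym r rat i.

(* Chern roots of Sym^d E: one root  \sum_i m_i x_i  for each multi-index
   m = (m_1..m_r) with |m| = d  (i.e. for each degree-d monomial). *)
Definition symd_index (r d : nat) : {set {ffun 'I_r -> 'I_d.+1}} :=
  [set m : {ffun 'I_r -> 'I_d.+1} | (\sum_(i < r) (m i : nat))%N == d].

Definition symd_root (r d : nat) (m : {ffun 'I_r -> 'I_d.+1}) : {mpoly rat[r]} :=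
  \sum_(i < r) (m i : nat)%:R *: 'X_i.

(* Total Chern class of Sym^d E as a polynomial in a grading variable t:
   c_t(Sym^d E) = prod_roots (1 + y t); c_j(Sym^d E) is its j-th coefficient. *)
Definition chern_symd_t (r d : nat) : {poly {mpoly rat[r]}} :=
  \prod_(m in symd_index r d) (1 + (symd_root m)%:P * 'X).

Definition chern_symd (r d j : nat) : {mpoly rat[r]} := (chern_symd_t r d)`_j.

(* Segre classes: s = c^{-1} degreewise, i.e. s_0 = 1 and
   s_n = - \sum_{j=1}^n c_j s_{n-j}  (for c_0 = 1). *)
Fixpoint segre_seq (R : ringType) (c : nat -> R) (n : nat) : seq R :=
  match n with
  | 0 => [:: 1]
  | n'.+1 => let s := segre_seq c n' in
             rcons s (- \sum_(j < n'.+1) c j.+1 * nth 0 s (n' - j))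
  end.

Definition segre (R : ringType) (c : nat -> R) (k : nat) : R :=
  nth 0 (segre_seq c k) k.

(* Partitions of k, in multiplicity form: a i = number of parts equal to i+1. *)
Definition mpartition (k : nat) := {ffun 'I_k -> 'I_k.+1}.

Definition is_partition (k : nat) (a : mpartition k) : bool :=
  (\sum_(i < k) i.+1 * (a i : nat))%N == k.

Definition parts_le (r k : nat) (a : mpartition k) : bool :=
  [forall i : 'I_k, (r < i.+1)%N ==> ((a i : nat) == 0%N)].

Definition chern_lambda (r k : nat) (a : mpartition k) : {mpoly rat[r]} :=
  \prod_(i < k) chernE r i.+1 ^+ (a i : nat).

(* Main.v *)
Require Import Defs.
From HB Require Import structures.
From mathcomp Require Import all_boot all_order all_algebra all_fingroup.
From mathcomp Require Import mpoly.
From mathcomp Require Import zify ring lra.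
Set Implicit Arguments. Unset Strict Implicit. Unset Printing Implicit Defensive.
Import GRing.Theory Num.Theory.
Local Open Scope ring_scope.


Definition PF (R : comNzRingType) (N : nat) (f : nat -> R) :=
  exists P : {poly R}, (size P <= N.+1)%N /\ forall d, f d = P.[d%:R].

Section PFgen.
Variable R : comNzRingType.
Implicit Types f g : nat -> R.

Lemma PF_ext N f g : (forall d, f d = g d) -> PF N f -> PF N g.
Proof. by move=> e [P [hP hf]]; exists P; split=> // d; rewrite -e. Qed.

Lemma PF_mono N M f : (N <= M)%N -> PF N f -> PF M f.
Proof. by move=> le [P [hP hf]]; exists P; split=> //; apply: leq_trans hP _. Qed.

Lemma PF_const (c : R) : PF 0 (fun _ => c).
Proof. by exists c%:P; split; [apply: size_polyC_leq1 | move=> d; rewrite hornerC]. Qed.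

Lemma PF_id : PF 1 (fun d => d%:R : R).
Proof. by exists 'X; split; [rewrite size_polyX | move=> d; rewrite hornerX]. Qed.

Lemma PF_add N f g : PF N f -> PF N g -> PF N (fun d => f d + g d).
Proof.
move=> [P [hP hf]] [Q [hQ hg]]; exists (P + Q); split.
  by rewrite (leq_trans (size_polyD _ _)) // geq_max hP hQ.
by move=> d; rewrite hornerD hf hg.
Qed.

Lemma PF_opp N f : PF N f -> PF N (fun d => - f d).
Proof.
move=> [P [hP hf]]; exists (- P); split; first by rewrite size_polyN.
by move=> d; rewrite hornerN hf.
Qed.

Lemma PF_mul N M f g : PF N f -> PF M g -> PF (N + M) (fun d => f d * g d).
Proof.
move=> [P [hP hf]] [Q [hQ hg]]; exists (P * Q); split.
  apply: leq_trans (size_polyMleq _ _) _.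
  have := leq_add hP hQ; lia.
by move=> d; rewrite hornerM hf hg.
Qed.

Lemma PF_exp N f e : PF N f -> PF (N * e) (fun d => f d ^+ e).
Proof.
move=> hf; elim: e => [|e IH].
  by rewrite muln0; apply: PF_ext (PF_const 1) => d; rewrite expr0.
rewrite mulnS; apply: PF_ext (PF_mul hf IH) => d; by rewrite exprS.
Qed.

Lemma PF_sum N (I : Type) (s : seq I) (P : pred I) (F : I -> nat -> R) :
  (forall i, PF N (F i)) -> PF N (fun d => \sum_(i <- s | P i) F i d).
Proof.
move=> hF; elim: s => [|x s IH].
  by apply: PF_mono (PF_ext _ (PF_const 0)) => // d; rewrite big_nil.
case hx: (P x).
  by apply: PF_ext (PF_add (hF x) IH) => d; rewrite big_cons hx.
by apply: PF_ext IH => d; rewrite big_cons hx.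
Qed.

Lemma PF_cmul N (c : R) f : PF N f -> PF N (fun d => c * f d).
Proof. by move=> hf; apply: PF_mul (PF_const c) hf. Qed.

End PFgen.

Lemma faulhaber i : PF i.+1 (fun d => \sum_(j < d.+1) (j%:R : rat) ^+ i).
Proof.
elim/ltn_ind: i => i IH.
set S := fun l d => \sum_(j < d.+1) (j%:R : rat) ^+ l.
have key d : ((d.+1)%:R : rat) ^+ i.+1 = \sum_(l < i.+1) S l d *+ 'C(i.+1, l).
  have := @telescope_sumr rat 0 d.+1 (fun k => (k%:R : rat) ^+ i.+1) (leq0n _).
  rewrite expr0n /= subr0 => <-.
  rewrite big_mkord /=.
  under eq_bigr => j _ do rewrite -natr1 exprD1n big_ord_recr /= binn mulr1n -addrA subrr addr0.
  rewrite exchange_big /=; apply: eq_bigr => l _; rewrite /S -sumrMnl //.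
have eqS d : S i d = (i.+1%:R)^-1 * ((d%:R + 1) ^+ i.+1 - \sum_(l < i) S l d *+ 'C(i.+1, l)).
  rewrite natr1 key big_ord_recr /= binSn addrAC subrr add0r.
  by rewrite -[S i d *+ _]mulr_natl mulrA mulVf ?mul1r // pnatr_eq0.
suff H : PF i.+1 (fun d => (i.+1%:R)^-1 * ((d%:R + 1) ^+ i.+1 - \sum_(l < i) S l d *+ 'C(i.+1, l))).
  by apply: PF_ext H => d; rewrite -[RHS]/(S i d) eqS.
apply: PF_cmul; apply: PF_add.
  have := PF_exp i.+1 (PF_add (@PF_id rat) (PF_mono (leq0n 1) (PF_const 1))); rewrite mul1n.
  by apply: PF_ext.
apply: PF_opp.
apply: PF_sum => l.
apply: PF_mono (PF_ext _ (PF_mul (IH l (ltn_ord l)) (PF_const ('C(i.+1, l))%:R))).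
  by rewrite addn0 ltnS ltnW.
by move=> d; rewrite mulr_natr.
Qed.

Lemma PF_psum N (f : nat -> rat) : PF N f -> PF N.+1 (fun d => \sum_(j < d.+1) f j).
Proof.
move=> [P [hP hf]].
have e d : \sum_(j < d.+1) f j = \sum_(l < N.+1) P`_l * \sum_(j < d.+1) (j%:R : rat) ^+ l.
  under eq_bigr => j _ do rewrite hf (horner_coef_wide _ hP).
  rewrite exchange_big /=; apply: eq_bigr => l _; by rewrite mulr_sumr.
apply: PF_ext (fun d => esym (e d)) _.
apply: PF_sum => l; apply: PF_cmul.
by apply: PF_mono (faulhaber l); exact: ltn_ord.
Qed.

Lemma PF_conv N b (Q : nat -> rat) : PF N Q ->
  PF (N + b + 1) (fun d => \sum_(j < d.+1) Q (d - j)%N * (j%:R) ^+ b).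
Proof.
move=> hQ.
have e d : \sum_(j < d.+1) Q (d - j)%N * (j%:R) ^+ b =
   \sum_(i < b.+1) (d%:R) ^+ i * \sum_(j < d.+1) (Q j * (- (j%:R : rat)) ^+ (b - i) *+ 'C(b, i)).
  transitivity (\sum_(j < d.+1) Q j * ((d - j)%N%:R) ^+ b).
    rewrite -(big_mkord xpredT (fun j => Q (d - j)%N * (j%:R) ^+ b)).
    rewrite -(big_mkord xpredT (fun j => Q j * ((d - j)%N%:R) ^+ b)).
    rewrite big_nat_rev /= add0n; apply: eq_big_nat => j /andP [_ hj].
    by rewrite subSS (subKn (hj : (j <= d)%N)).
  under eq_bigr => j _ do rewrite (natrB _ (ltn_ord j : (j <= d)%N)) addrC exprDn mulr_sumr.
  rewrite exchange_big /=; apply: eq_bigr => i _; rewrite mulr_sumr.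
  apply: eq_bigr => j _; rewrite -!mulrnAr; ring.
suff H : PF (N + b + 1) (fun d => \sum_(i < b.+1) (d%:R) ^+ i * \sum_(j < d.+1) (Q j * (- (j%:R : rat)) ^+ (b - i) *+ 'C(b, i))).
  by apply: PF_ext H => d; rewrite e.
apply: PF_sum => i.
have hi : (i <= b)%N by rewrite -ltnS.
have H1 := PF_exp i (@PF_id rat).
have H2 := PF_exp (b - i) (PF_opp (@PF_id rat)).
have H3 := PF_psum (PF_mul hQ (PF_mul H2 (PF_const ('C(b, i))%:R))).
apply: PF_mono (PF_ext _ (PF_mul H1 H3)).
  lia.
move=> d /=; congr (_ * _); apply: eq_bigr => j _; by rewrite mulr_natr mulrnAr.
Qed.

Definition eqm (R : nzRingType) (n : nat) (p q : {poly R}) :=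
  forall i, (i <= n)%N -> p`_i = q`_i.

Section Eqm.
Variable R : comNzRingType.
Implicit Types p q : {poly R}.

Lemma eqm_mul n p p' q q' : eqm n p p' -> eqm n q q' -> eqm n (p * q) (p' * q').
Proof.
move=> hp hq i hi; rewrite !coefM; apply: eq_bigr => j _.
rewrite hp ?hq //; first by apply: leq_trans (leq_subr _ _) hi.
by apply: leq_trans hi; rewrite -ltnS.
Qed.

Lemma eqm_prod n r (F G : nat -> {poly R}) : (forall i, eqm n (F i) (G i)) ->
  eqm n (\prod_(i < r) F i) (\prod_(i < r) G i).
Proof.
move=> h; elim: r => [|r IH]; first by rewrite !big_ord0.
by rewrite !big_ord_recr /=; apply: eqm_mul.
Qed.
End Eqm.

Definition Tp (R : nzRingType) (w : nat -> R) (D : nat) : {poly R} := \poly_(j < D.+1) w j.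

Definition Cf (R : comNzRingType) (r : nat) (w : nat -> nat -> R) (d : nat) : R :=
  (\prod_(i < r) Tp (w i) d)`_d.

Lemma Cf_trunc (R : comNzRingType) r (w : nat -> nat -> R) e D : (e <= D)%N ->
  (\prod_(i < r) Tp (w i) D)`_e = Cf r w e.
Proof.
move=> eD; rewrite /Cf; apply: (@eqm_prod _ e r (fun i => Tp (w i) D) (fun i => Tp (w i) e)) => // i l hl.
by rewrite /Tp !coef_poly !ltnS hl (leq_trans hl eD).
Qed.

Lemma Cf_rec (R : comNzRingType) r (w : nat -> nat -> R) d :
  Cf r.+1 w d = \sum_(j < d.+1) Cf r w (d - j)%N * w r j.
Proof.
rewrite /Cf big_ord_recr /= mulrC coefM; apply: eq_bigr => j _.
rewrite mulrC Cf_trunc ?leq_subr //; congr (_ * _).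
by rewrite /Tp coef_poly ltn_ord.
Qed.

Lemma Cf_1 (R : comNzRingType) (w : nat -> nat -> R) d : Cf 1 w d = w 0%N d.
Proof. by rewrite /Cf big_ord1 /Tp coef_poly ltnSn. Qed.

Lemma symd_coef (R : comNzRingType) r d (w : nat -> nat -> R) :
  \sum_(m in symd_index r d) \prod_(i < r) w i (m i) = Cf r w d.
Proof.
rewrite /Cf.
have -> : \prod_(i < r) Tp (w i) d = \prod_(i < r) \sum_(j < d.+1) (w i j)%:P * 'X^j.
  by apply: eq_bigr => i _; rewrite /Tp poly_def; apply: eq_bigr => j _; rewrite mul_polyC.
rewrite bigA_distr_bigA /= coef_sum.
rewrite [RHS](bigID (fun m : {ffun 'I_r -> 'I_d.+1} => m \in symd_index r d)) /=.
rewrite [X in _ = _ + X]big1 ?addr0; last first.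
  move=> m; rewrite inE => hm.
  by rewrite big_split /= -rmorph_prod /= coefCM prodrXr coefXn eq_sym (negbTE hm) mulr0.
apply: eq_bigr => m; rewrite inE => /eqP hm.
by rewrite big_split /= -rmorph_prod /= coefCM prodrXr coefXn hm eqxx mulr1.
Qed.


Lemma Cf_PF r (e : nat -> nat) :
  PF (\sum_(i < r.+1) e i + r) (Cf r.+1 (fun i j => (j%:R : rat) ^+ e i)).
Proof.
elim: r => [|r IH].
  rewrite big_ord1 addn0; have := PF_exp (e 0%N) (@PF_id rat); rewrite mul1n.
  by apply: PF_ext => d; rewrite Cf_1.
apply: PF_mono (PF_ext _ (PF_conv (e r.+1) IH)).
  by rewrite [X in (_ <= X + _)%N]big_ord_recr /=; lia.
by move=> d; rewrite Cf_rec.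
Qed.

Lemma PF_map (A : comAlgType rat) N (f : nat -> rat) (v : A) :
  PF N f -> PF N (fun d => f d *: v).
Proof.
move=> [P [hP hf]]; exists (map_poly (in_alg A) P * v%:P); split.
  apply: leq_trans (size_polyMleq _ _) _.
  rewrite size_map_poly.
  have := size_polyC_leq1 v.
  move: (size v%:P) => c hc.
  apply: leq_trans hP; rewrite -subn1 leq_subLR [(1 + _)%N]addnC leq_add2l //.
move=> d; rewrite hornerM hornerC -(rmorph_nat (in_alg A)) horner_map /=.
by rewrite -hf mulr_algl.
Qed.

Lemma card_fib n k (f : {ffun 'I_n -> 'I_k}) :
  (\sum_(i < k) #|[pred l | f l == i]|)%N = n.
Proof.
transitivity #|'I_n|; last exact: card_ord.
rewrite -sum1_card (partition_big f xpredT) //=; apply: eq_bigr => i _.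
by rewrite -sum1_card.
Qed.

Lemma prod_fib (R : comNzRingType) n k (f : {ffun 'I_n -> 'I_k}) (G : 'I_k -> R) :
  \prod_(l < n) G (f l) = \prod_(i < k) G i ^+ #|[pred l | f l == i]|.
Proof.
rewrite (partition_big f xpredT) //=; apply: eq_bigr => i _.
rewrite -prodr_const; apply: eq_bigr => l /eqP -> //.
Qed.

Definition psum r d n : {mpoly rat[r]} := \sum_(m in symd_index r d) (symd_root m) ^+ n.

Lemma psum_PF r n : PF (n + r) (fun d => psum r.+1 d n).
Proof.
pose ec (f : {ffun 'I_n -> 'I_r.+1}) i := #|[pred l | f l == inord i]|.
have e d : psum r.+1 d n = \sum_(f : {ffun 'I_n -> 'I_r.+1})
    Cf r.+1 (fun i j => (j%:R : rat) ^+ ec f i) d *: \prod_(l < n) 'X_(f l).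
  rewrite /psum.
  under eq_bigr => m _ do rewrite -[n in _ ^+ n]card_ord -prodr_const /symd_root
      bigA_distr_bigA /= (eq_bigr _ (fun f _ => scaler_prod _ _ _ _)).
  rewrite exchange_big /=; apply: eq_bigr => f _; rewrite -scaler_suml; congr (_ *: _).
  rewrite -symd_coef; apply: eq_bigr => m _.
  rewrite (prod_fib f (fun i => ((m i)%:R : rat))); apply: eq_bigr => i _.
  by rewrite /ec inord_val.
apply: PF_ext (fun d => esym (e d)) _.
apply: PF_sum => f; apply: PF_map.
apply: PF_mono (Cf_PF r (ec f)).
rewrite leq_add2r -(card_fib f) leq_eqVlt; apply/orP; left; apply/eqP.
by apply: eq_bigr => i _; rewrite /ec inord_val.
Qed.
Section Segre.
Variable R : ringType.
Variable c : nat -> R.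

Lemma size_segre_seq n : size (segre_seq c n) = n.+1.
Proof. by elim: n => [|n IH] //=; rewrite size_rcons IH. Qed.

Lemma segre_seq_nth n i : (i <= n)%N -> nth 0 (segre_seq c n) i = segre c i.
Proof.
elim: n => [|n IH] hi; first by move: hi; rewrite leqn0 => /eqP ->.
rewrite leq_eqVlt in hi; case/orP: hi => [/eqP -> //|hi].
by rewrite /= nth_rcons size_segre_seq hi IH.
Qed.

Lemma segre0 : segre c 0 = 1.
Proof. by []. Qed.

Lemma segreS n : segre c n.+1 = - \sum_(j < n.+1) c j.+1 * segre c (n - j).
Proof.
rewrite {1}/segre /= nth_rcons size_segre_seq ltnn eqxx; congr (- _).
by apply: eq_bigr => j _; rewrite segre_seq_nth // leq_subr.
Qed.
End Segre.

Lemma segre_ext (R : ringType) (c c' : nat -> R) n : (forall j, c j = c' j) ->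
  segre c n = segre c' n.
Proof.
move=> e; elim/ltn_ind: n => n IH; case: n IH => [|n] IH; first by rewrite !segre0.
rewrite !segreS; congr (- _); apply: eq_bigr => j _.
by rewrite e IH // ltnS leq_subr.
Qed.

Lemma segre_morph (R S : ringType) (f : {rmorphism R -> S}) (c : nat -> R) n :
  f (segre c n) = segre (fun j => f (c j)) n.
Proof.
elim/ltn_ind: n => n IH; case: n IH => [|n] IH; first by rewrite !segre0 rmorph1.
rewrite !segreS rmorphN rmorph_sum; congr (- _); apply: eq_bigr => j _.
by rewrite rmorphM IH // ltnS leq_subr.
Qed.

Section EqmLemmas.
Variable A : comNzRingType.
Implicit Types p q : {poly A}.
Lemma eqm_refl n p : eqm n p p. Proof. by []. Qed.
Lemma eqm_sym n p q : eqm n p q -> eqm n q p. Proof. by move=> h i hi; rewrite h. Qed.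
Lemma eqm_trans n p q r : eqm n p q -> eqm n q r -> eqm n p r.
Proof. by move=> h1 h2 i hi; rewrite h1 ?h2. Qed.
Lemma eqm_add n p p' q q' : eqm n p p' -> eqm n q q' -> eqm n (p + q) (p' + q').
Proof. by move=> h1 h2 i hi; rewrite !coefD h1 ?h2. Qed.
Lemma eqm_eq n p q : p = q -> eqm n p q. Proof. by move=> ->. Qed.
End EqmLemmas.

Section Newton.
Variable A : comNzRingType.
Variable K : nat.

Definition Qp (y : A) : {poly A} :=
  \poly_(n < K.+1) (if n is 0 then 0 else (-1) ^+ n.-1 * y ^+ n).

Lemma hQ y : eqm K ((1 + y%:P * 'X) * Qp y) (y%:P * 'X).
Proof.
move=> l hl; rewrite mulrDl mul1r -mulrA coefD coefCM coefXM coefCM coefX.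
rewrite /Qp !coef_poly (hl : (l < K.+1)%N).
case: l hl => [|[|n]] hl /=; first by rewrite !mulr0 addr0.
  by rewrite expr0 mul1r expr1 mulr1 ?if_same mulr0 addr0.
rewrite ifT; last by lia.
rewrite mulr0 !exprS; ring.
Qed.

Variables (I : Type).
Variable y : I -> A.

Lemma deriv1' : (1 : {poly A})^`() = 0.
Proof. by rewrite -polyC1 derivC. Qed.

Definition cpo (s : seq I) : {poly A} := \prod_(i <- s) (1 + (y i)%:P * 'X).
Definition Pp (s : seq I) : {poly A} := \sum_(i <- s) Qp (y i).

Lemma cpo0 s : (cpo s)`_0 = 1.
Proof.
elim: s => [|x s IH]; first by rewrite /cpo big_nil coef1.
rewrite /cpo big_cons coef0M -/(cpo s) IH mulr1 coefD coef1 coefCM coefX mulr0 addr0 //.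
Qed.

Lemma hB s : eqm K ('X * (cpo s)^`()) (cpo s * Pp s).
Proof.
elim: s => [|x s IH].
  by rewrite /cpo /Pp !big_nil deriv1' mulr0 mul1r.
rewrite /cpo /Pp !big_cons -/(cpo s) -/(Pp s).
rewrite derivM derivD deriv1' add0r derivM derivC mul0r add0r derivX mulr1.
apply: (@eqm_trans _ _ _ ((y x)%:P * 'X * cpo s + (1 + (y x)%:P * 'X) * ('X * (cpo s)^`()))).
  by apply: eqm_eq; ring.
apply: (@eqm_trans _ _ _ (((1 + (y x)%:P * 'X) * Qp (y x)) * cpo s + (1 + (y x)%:P * 'X) * (cpo s * Pp s))).
  apply: eqm_add; last by apply: eqm_mul.
  by apply: eqm_mul => //; apply: eqm_sym; apply: hQ.
by apply: eqm_eq; ring.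
Qed.

Variable s : seq I.
Let c j := (cpo s)`_j.
Let p n := \sum_(i <- s) y i ^+ n.

Lemma newton : K%:R * segre c K = - \sum_(j < K) (-1) ^+ j * p j.+1 * segre c (K - j.+1).
Proof.
pose S : {poly A} := \poly_(i < K.+1) segre c i.
have hA : eqm K (cpo s * S) 1.
  move=> i hi; rewrite coefM coef1.
  case: i hi => [|n] hi.
    by rewrite big_ord1 /S coef_poly /= cpo0 mul1r.
  rewrite big_ord_recl /= cpo0 mul1r /S coef_poly ltnS hi segreS.
  rewrite addrC; apply/eqP; rewrite subr_eq0; apply/eqP; apply: eq_bigr => j _.
  by rewrite coef_poly /bump /= subSS ltnS (leq_trans (leq_subr _ _) (ltnW hi)).
have h1 : eqm K ('X * (cpo s * S)^`()) 0.
  move=> i hi; rewrite coefXM coef0; case: i hi => [|n] hi //=.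
  by rewrite coef_deriv hA // coef1 /= mul0rn.
have h2 : eqm K ('X * (cpo s)^`() * S * S + (cpo s * S) * ('X * S^`())) 0.
  apply: (@eqm_trans _ _ _ ('X * (cpo s * S)^`() * S)).
    by apply: eqm_eq; rewrite derivM; ring.
  by rewrite -(mul0r S); apply: eqm_mul.
have h3 : eqm K (Pp s * S + 'X * S^`()) 0.
  apply: eqm_trans h2; apply: eqm_add.
    apply: (@eqm_trans _ _ _ ((cpo s * S) * (Pp s * S))); last first.
      by apply: (@eqm_trans _ _ _ (cpo s * Pp s * S * S)); [apply: eqm_eq; ring|
        apply: eqm_mul => //; apply: eqm_mul => //; apply: eqm_sym; apply: hB].
    by rewrite -{1}(mul1r (Pp s * S)); apply: eqm_mul => //; apply: eqm_sym.
  by rewrite -{1}(mul1r ('X * S^`())); apply: eqm_mul => //; apply: eqm_sym.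
have := h3 K (leqnn K); rewrite coefD coef0 coefXM coefM big_ord_recl.
have P0 : (Pp s)`_0 = 0 by rewrite /Pp coef_sum big1 // => i _; rewrite /Qp coef_poly.
rewrite P0 mul0r add0r.
case: eqP => [K0|K0].
  by move=> _; rewrite K0 mul0r big_ord0 oppr0.
have hK : K = K.-1.+1 by case: (K) K0.
rewrite coef_deriv -hK /S coef_poly ltnSn.
move/eqP; rewrite addrC addr_eq0 => /eqP H; rewrite mulr_natl H; congr (- _).
apply: eq_bigr => j _.
rewrite /bump /=.
rewrite coef_poly ltnS leq_subr; congr (_ * _).
rewrite /Pp coef_sum /p mulr_sumr; apply: eq_bigr => i _.
by rewrite /Qp coef_poly ltnS (ltn_ord j).
Qed.
End Newton.

Lemma newton_symd r d k :
  k%:R * segre (chern_symd r d) k =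
  - \sum_(j < k) (-1) ^+ j * psum r d j.+1 * segre (chern_symd r d) (k - j.+1).
Proof.
have e : forall j, chern_symd r d j = (cpo (@symd_root r d) (enum (symd_index r d)))`_j.
  by move=> j; rewrite /chern_symd /chern_symd_t /cpo big_enum.
rewrite (segre_ext _ e) (newton k (@symd_root r d) (enum (symd_index r d))); congr (- _).
apply: eq_bigr => j _; by rewrite /psum big_enum (segre_ext _ e).
Qed.

Lemma segre_PF r k : PF (r.+1 * k) (fun d => segre (chern_symd r.+1 d) k).
Proof.
elim/ltn_ind: k => k IH; case: k IH => [|k] IH.
  by rewrite muln0; apply: PF_ext (PF_const 1) => d; rewrite segre0.
pose c : {mpoly rat[r.+1]} := ((k.+1%:R : rat)^-1)%:A.
have e d : segre (chern_symd r.+1 d) k.+1 = c * (k.+1%:R * segre (chern_symd r.+1 d) k.+1).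
  have -> : (k.+1%:R : {mpoly rat[r.+1]}) = (k.+1%:R : rat) *: 1 by rewrite scaler_nat.
  by rewrite mulrA /c mulr_algl scalerA mulVf ?pnatr_eq0 // scale1r mul1r.
apply: PF_ext (fun d => esym (e d)) _; apply: PF_cmul.
apply: PF_ext (fun d => esym (newton_symd r.+1 d k.+1)) _.
apply: PF_opp; apply: PF_sum => j.
have hj : (j < k.+1)%N := ltn_ord j.
apply: PF_mono (PF_mul (PF_cmul ((-1) ^+ j) (psum_PF r j.+1)) (IH (k.+1 - j.+1)%N _)); last first.
  by rewrite subSS ltnS leq_subr.
rewrite subSS mulnBr; have := leq_mul (leqnn r.+1) hj; nia.
Qed.


Section Homog.
Variable r : nat.
Notation A := {mpoly rat[r]}.

Lemma X_homog (i : 'I_r) : ('X_i : A) \is 1.-homog.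
Proof. by rewrite dhomogX; apply/eqP; apply: mdeg1. Qed.

Lemma symd_root_homog d (m : {ffun 'I_r -> 'I_d.+1}) : symd_root m \is 1.-homog.
Proof. by apply: rpred_sum => i _; apply: rpredZ; apply: X_homog. Qed.

Lemma cpo_homog (I : Type) (y : I -> A) (s : seq I) :
  (forall i, y i \is 1.-homog) -> forall j, (cpo y s)`_j \is j.-homog.
Proof.
move=> hy; elim: s => [|x s IH] j.
  rewrite /cpo big_nil coef1; case: j => [|j] /=; first exact: dhomog1.
  exact: dhomog0.
rewrite /cpo big_cons -/(cpo y s) mulrDl mul1r -mulrA coefD coefCM coefXM.
case: j => [|j] /=; first by rewrite mulr0 addr0 IH.
by apply: rpredD; [apply: IH | rewrite -add1n; apply: dhomogM].
Qed.

Lemma chern_symd_homog d j : chern_symd r d j \is j.-homog.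
Proof.
rewrite /chern_symd /chern_symd_t -big_enum -/(cpo _ _).
apply: (cpo_homog (y := @symd_root r d)) => m; exact: symd_root_homog.
Qed.

Lemma segre_homog (c : nat -> A) : (forall j, c j \is j.-homog) ->
  forall k, segre c k \is k.-homog.
Proof.
move=> hc k; elim/ltn_ind: k => k IH; case: k IH => [|k] IH.
  by rewrite segre0; exact: dhomog1.
rewrite segreS rpredN; apply: rpred_sum => j _.
have e : (j.+1 + (k - j))%N = k.+1 by rewrite addSn subnKC // -ltnS.
have := dhomogM (hc j.+1) (IH (k - j)%N _); rewrite e; apply.
by rewrite ltnS leq_subr.
Qed.

End Homog.

Section Sym.
Variable r : nat.
Notation A := {mpoly rat[r]}.

Lemma msymXU (s : 'S_r) (i : 'I_r) : msym s ('X_i : A) = 'X_(s i).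
Proof. by rewrite /msym mmapX mmap1U. Qed.

Lemma msym_symd_root (s : 'S_r) d (m : {ffun 'I_r -> 'I_d.+1}) :
  msym s (symd_root m) = symd_root [ffun i => m ((s^-1)%g i)].
Proof.
rewrite /symd_root raddf_sum /=.
under eq_bigr => i _ do rewrite msymZ msymXU.
rewrite [RHS](reindex_inj (@perm_inj _ s)) /=; apply: eq_bigr => i _.
by rewrite ffunE permK.
Qed.

Lemma chern_symd_sym (s : 'S_r) d j : msym s (chern_symd r d j) = chern_symd r d j.
Proof.
rewrite /chern_symd -coef_map /chern_symd_t rmorph_prod /=.
apply: (congr1 (fun p : {poly A} => p`_j)).
have hinj : injective (fun m : {ffun 'I_r -> 'I_d.+1} => [ffun i => m ((s^-1)%g i)]).
  move=> m1 m2 /= e; apply/ffunP => i.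
  have := congr1 (fun f : {ffun 'I_r -> 'I_d.+1} => f (s i)) e.
  by rewrite /= !ffunE permK.
rewrite [RHS](reindex_inj hinj) /=; apply: eq_big => m.
  rewrite !inE.
  have e : (\sum_(i < r) [ffun i0 => m ((s^-1)%g i0)] i)%N = (\sum_(i < r) m i)%N.
    rewrite [RHS](reindex_inj (@perm_inj _ (s^-1)%g)) /=; apply: eq_bigr => i _.
    by rewrite ffunE.
  by rewrite e.
move=> _; rewrite rmorphD rmorph1 rmorphM /= map_polyC map_polyX /=.
by rewrite msym_symd_root.
Qed.

Lemma segre_sym (s : 'S_r) d k : msym s (segre (chern_symd r d) k) = segre (chern_symd r d) k.
Proof.
rewrite (segre_morph (msym s)); apply: segre_ext => j; exact: chern_symd_sym.
Qed.

Lemma segre_symmetric d k : segre (chern_symd r d) k \is symmetric.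
Proof. by apply/issymP => s; apply: segre_sym. Qed.

Lemma segre_homog_d d k : segre (chern_symd r d) k \is k.-homog.
Proof. by apply: segre_homog => j; apply: chern_symd_homog. Qed.
End Sym.


Section Coef.
Variable r : nat.
Notation A := {mpoly rat[r]}.

Lemma natr_inj_mpoly (i j : nat) : (i%:R : A) = j%:R -> i = j.
Proof.
move/(congr1 (mcoeff 0%MM)); rewrite !mcoeffMn mcoeff1 eqxx => /eqP.
by rewrite eqr_nat => /eqP.
Qed.

Lemma poly_nat_roots (Q : {poly A}) : (forall d, Q.[d%:R] = 0) -> Q = 0.
Proof.
move=> h; apply/eqP; apply/negPn/negP => nz.
have H1 : all (root Q) [seq (i%:R : A) | i <- iota 0 (size Q)].
  by apply/allP => x /mapP [i _ ->]; rewrite /root h.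
have H2 : uniq [seq (i%:R : A) | i <- iota 0 (size Q)].
  rewrite map_inj_uniq ?iota_uniq //; exact: natr_inj_mpoly.
by have := max_poly_roots nz H1 H2; rewrite size_map size_iota ltnn.
Qed.

Lemma horner_additive (f : {additive A -> A}) (P : {poly A}) d :
  (map_poly f P).[d%:R] = f P.[d%:R].
Proof.
rewrite (horner_coef_wide _ (size_poly _ _)) (horner_coef_wide _ (leqnn (size P))).
rewrite raddf_sum; apply: eq_bigr => i _.
by rewrite coef_map -natrX !mulr_natr raddfMn.
Qed.

Lemma coef_fixed (f : {additive A -> A}) (P : {poly A}) :
  (forall d, f P.[d%:R] = P.[d%:R]) -> forall j, f P`_j = P`_j.
Proof.
move=> h; have : map_poly f P - P = 0.
  by apply: poly_nat_roots => d; rewrite hornerD hornerN horner_additive h subrr.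
by move/eqP; rewrite subr_eq0 => /eqP e j; rewrite -coef_map e.
Qed.
End Coef.


Lemma big_widen_idx (R : Type) (idx : R) (op : Monoid.com_law idx) (F : nat -> R) n1 n2 :
  (n1 <= n2)%N -> (forall i, (n1 <= i)%N -> F i = idx) ->
  \big[op/idx]_(i < n1) F i = \big[op/idx]_(i < n2) F i.
Proof.
move=> le h; rewrite (big_ord_widen n2 F le) big_mkcond /=; apply: eq_bigr => i _.
by case: ifP => // /negbT; rewrite -leqNgt => /h ->.
Qed.

Section Part.
Variables r k : nat.
Notation A := {mpoly rat[r.+1]}.
Notation S := [tuple mesym r.+1 rat i.+1 | i < r.+1].

Definition Mi (m : 'X_{1..r.+1}) (i : nat) : nat := if (i < r.+1)%N then m (inord i) else 0%N.
Definition part (m : 'X_{1..r.+1}) : mpartition k := [ffun j : 'I_k => inord (Mi m j)].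

Lemma mnmwgtE m : mnmwgt m = (\sum_(i < r.+1) i.+1 * Mi m i)%N.
Proof.
rewrite /mnmwgt; apply: eq_bigr => i _; by rewrite /Mi ltn_ord inord_val mulnC.
Qed.

Lemma Mi_bound m i : mnmwgt m = k -> (i.+1 * Mi m i <= k)%N.
Proof.
rewrite mnmwgtE => <-; case hi: (i < r.+1)%N; last by rewrite /Mi hi muln0.
rewrite (bigD1 (Ordinal hi)) //=; exact: leq_addr.
Qed.

Lemma Mi_le m i : mnmwgt m = k -> (Mi m i <= k)%N.
Proof. by move=> h; apply: leq_trans (Mi_bound i h); apply: leq_pmull. Qed.

Lemma Mi_zero m i : mnmwgt m = k -> (k <= i)%N -> Mi m i = 0%N.
Proof. move=> h hi; have := Mi_bound i h; move: (Mi m i) => x; nia. Qed.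

Lemma part_val m (j : 'I_k) : mnmwgt m = k -> (part m j : nat) = Mi m j.
Proof. by move=> h; rewrite ffunE inordK // ltnS Mi_le. Qed.

Lemma part_is m : mnmwgt m = k -> is_partition (part m).
Proof.
move=> h; rewrite /is_partition; apply/eqP.
transitivity (\sum_(i < k) i.+1 * Mi m i)%N.
  by apply: eq_bigr => i _; rewrite part_val.
rewrite (@big_widen_idx _ 0%N addn (fun i => i.+1 * Mi m i)%N k (r.+1 + k)) ?leq_addl //; last first.
  by move=> i hi; rewrite Mi_zero // muln0.
transitivity (mnmwgt m); last exact: h.
rewrite mnmwgtE (@big_widen_idx _ 0%N addn (fun i => i.+1 * Mi m i)%N r.+1 (r.+1 + k)) ?leq_addr //.
by move=> i hi; rewrite /Mi ltnNge hi muln0.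
Qed.

Lemma part_chern m : mnmwgt m = k -> chern_lambda r.+1 (part m) = 'X_[m] \mPo S.
Proof.
move=> h; rewrite comp_mpolyX /chern_lambda.
transitivity (\prod_(i < k) chernE r.+1 i.+1 ^+ Mi m i).
  by apply: eq_bigr => i _; rewrite part_val.
transitivity (\prod_(i < r.+1) chernE r.+1 i.+1 ^+ Mi m i); last first.
  by apply: eq_bigr => i _; rewrite tnth_mktuple /Mi ltn_ord inord_val.
rewrite (@big_widen_idx _ 1 *%R (fun i => chernE r.+1 i.+1 ^+ Mi m i) k (r.+1 + k)) ?leq_addl //; last first.
  by move=> i hi; rewrite Mi_zero // expr0.
rewrite (@big_widen_idx _ 1 *%R (fun i => chernE r.+1 i.+1 ^+ Mi m i) r.+1 (r.+1 + k)) ?leq_addr //.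
by move=> i hi; rewrite /Mi ltnNge hi expr0.
Qed.

Lemma sym_to_part (v : A) : v \is symmetric -> v \is k.-homog ->
  exists cf : mpartition k -> rat, v = \sum_(a | is_partition a) cf a *: chern_lambda r.+1 a.
Proof.
move=> vs vh; have [t [tS th]] := sym_fundamental_homog vs vh.
have hw : {in msupp t, forall m, mnmwgt m = k} by apply/dhomogP.
exists (fun a => \sum_(m <- msupp t | (mnmwgt m == k) && (part m == a)) t@_m).
rewrite -tS comp_mpolyEX.
have -> : \sum_(m <- msupp t) t@_m *: ('X_[m] \mPo S) =
          \sum_(m <- msupp t | mnmwgt m == k) t@_m *: chern_lambda r.+1 (part m).
  rewrite big_seq [RHS]big_seq_cond; apply: eq_big => m.
    by case: (boolP (m \in msupp t)) => //= /hw ->; rewrite eqxx.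
  by move=> hm; rewrite part_chern // hw.
rewrite (partition_big part (fun a : mpartition k => is_partition a)); last by move=> m /eqP; apply: part_is.
apply: eq_bigr => a _; rewrite scaler_suml; apply: eq_bigr => m /andP [_ /eqP ->] //.
Qed.
End Part.


Lemma exist_p r k : exists p : mpartition k -> {poly rat},
  (forall a, (size (p a) <= (r.+1 * k).+1)%N) /\
  (forall d, segre (chern_symd r.+1 d) k
       = \sum_(a : mpartition k | is_partition a) (p a).[d%:R] *: chern_lambda r.+1 a).
Proof.
have [P [hP hs]] := segre_PF r k.
have hc : forall j : 'I_(r.+1 * k).+1, exists cf : mpartition k -> rat,
    P`_j = \sum_(a | is_partition a) cf a *: chern_lambda r.+1 a.
  move=> j; apply: sym_to_part.
    apply/issymP => s; apply: (coef_fixed (f := msym s)) => d.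
    by rewrite -hs; exact: segre_sym.
  rewrite homog_piE; apply/eqP; apply: (coef_fixed (f := pihomog mdeg k)) => d.
  by rewrite -hs; apply: pihomog_dE; exact: segre_homog_d.
have [cf hcf] := fin_all_exists hc.
exists (fun a => \poly_(j < (r.+1 * k).+1) cf (inord j) a).
split; first by move=> a; apply: size_poly.
move=> d; rewrite hs (horner_coef_wide _ hP).
under [RHS]eq_bigr => a _ do
  rewrite (horner_coef_wide _ (size_poly _ _)) scaler_suml.
rewrite exchange_big /=; apply: eq_bigr => j _.
rewrite hcf mulr_suml; apply: eq_bigr => a _.
rewrite coef_poly ltn_ord inord_val -!natrX mulr_natr scalerMnl mulr_natr //.
Qed.

Import Order.TTheory.


Lemma powsum_lb n d : ((d%:R : rat) ^+ n.+1) <= n.+1%:R * \sum_(j < d.+1) (j%:R : rat) ^+ n.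
Proof.
elim: d => [|d IH].
  rewrite expr0n /= big_ord1; apply: mulr_ge0 => //; apply: exprn_ge0 => //.
rewrite big_ord_recr /= mulrDr.
have key : ((d.+1%:R : rat) ^+ n.+1) - (d%:R) ^+ n.+1 <= n.+1%:R * (d.+1%:R) ^+ n.
  rewrite subrXX /= -natrB // subSnn mul1r.
  have -> : (n.+1%:R : rat) * (d.+1%:R) ^+ n = \sum_(i < n.+1) (d.+1%:R : rat) ^+ n.
    by rewrite sumr_const card_ord mulr_natl.
  apply: ler_sum => i _.
  have hi : (i <= n)%N by rewrite -ltnS.
  apply: (@le_trans _ _ ((d.+1%:R : rat) ^+ (n - i) * (d.+1%:R) ^+ i)).
    by rewrite ler_wpM2l ?exprn_ge0 // lerXn2r ?nnegrE // ler_nat.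
  by rewrite -exprD subnK.
lra.
Qed.

Lemma sum_rev (F : nat -> rat) d : \sum_(j < d.+1) F (d - j)%N = \sum_(j < d.+1) F j.
Proof.
rewrite -(big_mkord xpredT (fun j => F (d - j)%N)) -(big_mkord xpredT F).
rewrite big_nat_rev /= add0n; apply: eq_big_nat => j /andP [_ hj].
by rewrite subSS (subKn (hj : (j <= d)%N)).
Qed.

Definition w1 (i j : nat) : rat := if i == 0%N then j%:R else 1.

Lemma Cf_lb r : exists2 c : rat, 0 < c & forall d, c * (d%:R) ^+ r.+1 <= Cf r.+1 w1 d.
Proof.
elim: r => [|r [c c0 IH]].
  by exists 1 => // d; rewrite Cf_1 /w1 /= mul1r expr1.
exists (c / r.+2%:R); first by apply: divr_gt0.
move=> d; rewrite Cf_rec.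
have -> : \sum_(j < d.+1) Cf r.+1 w1 (d - j)%N * w1 r.+1 j = \sum_(j < d.+1) Cf r.+1 w1 (d - j)%N.
  by apply: eq_bigr => j _; rewrite /w1 /= mulr1.
rewrite (sum_rev (Cf r.+1 w1)).
apply: (@le_trans _ _ (\sum_(j < d.+1) c * (j%:R) ^+ r.+1)); last first.
  by apply: ler_sum => j _; apply: IH.
rewrite -mulr_sumr.
have := powsum_lb r.+1 d.
have hp : 0 < (r.+2%:R : rat) by [].
move: (_ ^+ r.+2) (\sum_(_ < _) _) => X Y h.
rewrite mulrAC ler_pdivrMr // -mulrA; apply: ler_wpM2l; first exact: ltW.
by rewrite mulrC.
Qed.

Lemma asym (Q : {poly rat}) N (C : rat) : 0 < C -> (size Q <= N.+1)%N ->
  (forall d, C * (d%:R) ^+ N <= Q.[d%:R]) -> size Q = N.+1.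
Proof.
move=> C0 hs h; apply/eqP; rewrite eqn_leq hs /= ltnNge; apply/negP => hsN.
case: N hs h hsN => [|N] hs h hsN.
  move: hsN; rewrite leqn0 size_poly_eq0 => /eqP Q0.
  by have := h 0%N; rewrite Q0 horner0 expr0 mulr1 leNgt C0.
pose M := \sum_(i < N.+1) `|Q`_i|.
have hb d : (1 <= d)%N -> C * d%:R <= M.
  move=> d1; have := h d; rewrite (horner_coef_wide _ hsN) => hd.
  have hx : 1 <= (d%:R : rat) by rewrite ler1n.
  have hxN : 0 < (d%:R : rat) ^+ N by apply: exprn_gt0; apply: lt_le_trans hx.
  have : C * d%:R * d%:R ^+ N <= M * d%:R ^+ N.
    rewrite -mulrA -exprS; apply: le_trans hd _.
    rewrite /M mulr_suml; apply: ler_sum => i _.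
    apply: (@le_trans _ _ (`|Q`_i| * d%:R ^+ i)).
      by apply: ler_wpM2r; [apply: exprn_ge0; apply: le_trans hx | apply: ler_norm].
    apply: ler_wpM2l => //.
    have hi : (i <= N)%N by rewrite -ltnS.
    have -> : (d%:R : rat) ^+ N = d%:R ^+ (N - i) * d%:R ^+ i by rewrite -exprD subnK.
    rewrite -{1}(mul1r (_ ^+ i)); apply: ler_wpM2r.
      by apply: exprn_ge0; apply: le_trans hx.
    exact: exprn_ege1.
  by rewrite ler_pM2r.
have M0 : 0 <= M / C by apply: divr_ge0; [apply: sumr_ge0 => i _ | apply: ltW].
have := hb (Num.Def.archi_bound (M / C)).+1 isT.
have := archi_boundP M0.
move: (Num.Def.archi_bound _) => b hb1 hb2.
have : M < C * b.+1%:R.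
  rewrite mulrC -ltr_pdivrMr //; apply: lt_trans hb1 _; by rewrite ltr_nat.
by rewrite ltNge hb2.
Qed.


Lemma sign_sq j : ((-1) ^+ j : rat) * (-1) ^+ j = 1.
Proof. by rewrite -exprMn mulrNN mulr1 expr1n. Qed.

Lemma newton_lb (I : Type) (y : I -> rat) (s : seq I) : (forall i, 0 <= y i) ->
  forall K, (\sum_(i <- s) y i ^+ 1) ^+ K
              <= (K`!)%:R * ((-1) ^+ K * segre (fun j => (cpo y s)`_j) K)
          /\ 0 <= (-1) ^+ K * segre (fun j => (cpo y s)`_j) K.
Proof.
move=> y0.
set c := fun j => (cpo y s)`_j.
pose t K := (-1) ^+ K * segre c K.
pose ps n := \sum_(i <- s) y i ^+ n.
have ps0 n : 0 <= ps n by apply: sumr_ge0 => i _; apply: exprn_ge0.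
move=> K; rewrite -/(t K) -/(ps 1%N).
elim/ltn_ind: K => K IH; case: K IH => [|K] IH.
  by rewrite /t segre0 expr0 !mul1r.
have E : K.+1%:R * t K.+1 = \sum_(j < K.+1) ps j.+1 * t (K.+1 - j.+1)%N.
  rewrite /t mulrCA (newton K.+1 y s) mulrN mulr_sumr -sumrN; apply: eq_bigr => j _.
  have hj : (j.+1 <= K.+1)%N by [].
  have -> : ((-1) ^+ K.+1 : rat) = (-1) ^+ (K.+1 - j.+1) * (-1) ^+ j.+1.
    by rewrite -exprD subnK.
  rewrite -/(ps j.+1) exprS.
  transitivity ((-1) ^+ (K.+1 - j.+1) * ((-1) ^+ j * (-1) ^+ j) * ps j.+1 * segre c (K.+1 - j.+1)).
    ring.
  by rewrite sign_sq; ring.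
have [IH1 IH2] := IH K (ltnSn K).
have tK : ps 1%N * t K <= K.+1%:R * t K.+1.
  rewrite E big_ord_recl /= subSS subn0 lerDl; apply: sumr_ge0 => j _.
  apply: mulr_ge0 => //.
  have hlt : (K.+1 - (bump 0 j).+1 < K.+1)%N by rewrite subSS ltnS leq_subr.
  by have [_ ] := IH _ hlt.
have f0 : 0 <= (K`!)%:R :> rat by [].
have h1 := ler_wpM2l f0 tK.
have h2 := ler_wpM2l (ps0 1%N) IH1.
have g : ps 1%N ^+ K.+1 <= (K.+1`!)%:R * t K.+1.
  rewrite exprS factS natrM.
  have e1 : ps 1%N * ((K`!)%:R * t K) = (K`!)%:R * (ps 1%N * t K) by ring.
  have e2 : K.+1%:R * (K`!)%:R * t K.+1 = (K`!)%:R * (K.+1%:R * t K.+1) by ring.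
  by rewrite e2; apply: (le_trans h2); rewrite e1.
split => //.
have : 0 <= (K.+1`!)%:R * t K.+1 by apply: le_trans g; apply: exprn_ge0.
by rewrite pmulr_rge0 // ltr0n fact_gt0.
Qed.

Section Eval.
Variable r : nat.
Notation A := {mpoly rat[r.+1]}.
Definition v0 : 'I_r.+1 -> rat := fun i => (i == ord0)%:R.

Lemma meval_mesym j : meval v0 (chernE r.+1 j.+1) = (j == 0%N)%:R.
Proof.
rewrite /chernE.
case: j => [|j].
  rewrite mesym1E rmorph_sum /= (bigD1 ord0) //= big1 ?addr0.
    by rewrite mevalXU /v0 eqxx.
  by move=> i hi; rewrite mevalXU /v0 (negbTE hi).
rewrite /mesym rmorph_sum /= big1 //= => h /eqP hh.
have : exists x, x \in h :\ ord0.
  apply/set0Pn; rewrite -card_gt0; have := cardsD1 ord0 h; rewrite hh.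
  move: (#|h :\ ord0|) => n; case: (ord0 \in h) => /=; lia.
case=> x /setD1P [xn0 xh].
by rewrite rmorph_prod (bigD1 x) //= mevalXU /v0 (negbTE xn0) mul0r.
Qed.

Lemma mevalXn' (x : A) n : meval v0 (x ^+ n) = meval v0 x ^+ n.
Proof. exact: rmorphXn. Qed.
Lemma mevalprod' (I : Type) (s : seq I) (P : pred I) (F : I -> A) :
  meval v0 (\prod_(i <- s | P i) F i) = \prod_(i <- s | P i) meval v0 (F i).
Proof. exact: rmorph_prod. Qed.
Lemma mevalsum' (I : Type) (s : seq I) (P : pred I) (F : I -> A) :
  meval v0 (\sum_(i <- s | P i) F i) = \sum_(i <- s | P i) meval v0 (F i).
Proof. exact: rmorph_sum. Qed.

Lemma meval_chern_lambda k (a : mpartition k) :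
  meval v0 (chern_lambda r.+1 a) = \prod_(j < k) ((j == 0%N :> nat)%:R) ^+ a j.
Proof.
rewrite /chern_lambda mevalprod'; apply: eq_bigr => j _.
by rewrite mevalXn' meval_mesym.
Qed.

Definition astar k : mpartition k := [ffun j : 'I_k => if (j == 0%N :> nat) then inord k else ord0].

Lemma astar0 k (j : 'I_k) : (j : nat) = 0%N -> (astar k j : nat) = k.
Proof. by move=> hj; rewrite ffunE hj eqxx inordK. Qed.

Lemma astarS k (j : 'I_k) : (j : nat) != 0%N -> (astar k j : nat) = 0%N.
Proof. by move=> hj; rewrite ffunE (negbTE hj). Qed.

Lemma astar_part k : is_partition (astar k).
Proof.
rewrite /is_partition; case: k => [|k]; first by rewrite big_ord0.
rewrite big_ord_recl /= astar0 // big1 ?addn0 ?mul1n //.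
by move=> i _; rewrite astarS ?muln0.
Qed.

Lemma astar_le k : parts_le r.+1 (astar k).
Proof.
apply/forallP => i; apply/implyP => hi; rewrite astarS //.
by rewrite -lt0n; move: hi; lia.
Qed.

Lemma eval_lambda_astar k : \prod_(j < k) ((j == 0%N :> nat)%:R : rat) ^+ astar k j = 1.
Proof.
apply: big1 => j _; case: (boolP ((j : nat) == 0%N)) => hj.
  by rewrite expr1n.
by rewrite astarS.
Qed.

Lemma eval_lambda_other k (a : mpartition k) : is_partition a -> a != astar k ->
  \prod_(j < k) ((j == 0%N :> nat)%:R : rat) ^+ a j = 0.
Proof.
move=> pa na.
case: (boolP [exists j : 'I_k, ((j : nat) != 0%N) && ((a j : nat) != 0%N)]).
  case/existsP => j /andP [hj haj].
  by rewrite (bigD1 j) //= (negbTE hj) expr0n (negbTE haj) mul0r.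
rewrite negb_exists => /forallP hall; exfalso; move/negP: na; apply.
have hz (j : 'I_k) : (j : nat) != 0%N -> (a j : nat) = 0%N.
  by move=> hj; have := hall j; rewrite hj /= negbK => /eqP.
apply/eqP/ffunP => j; apply: val_inj => /=.
case: (eqVneq (j : nat) 0%N) => hj; last by rewrite astarS // hz.
rewrite astar0 //; move/eqP: pa; rewrite (bigD1 j) //= hj mul1n big1 ?addn0 //.
move=> i hi; rewrite hz ?muln0 //; apply: contra hi => /eqP hi0.
by apply/eqP; apply: val_inj; rewrite /= hi0 hj.
Qed.

Lemma eval_sum k (p : mpartition k -> {poly rat}) (d : nat) :
  meval v0 (\sum_(a | is_partition a) (p a).[d%:R] *: chern_lambda r.+1 a) = (p (astar k)).[d%:R].
Proof.
rewrite mevalsum' (bigD1 (astar k)) ?astar_part //= big1 ?addr0.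
  by rewrite mevalZ meval_chern_lambda eval_lambda_astar mulr1.
by move=> a /andP [pa na]; rewrite mevalZ meval_chern_lambda eval_lambda_other ?mulr0.
Qed.

Lemma eval_chern_symd d j : meval v0 (chern_symd r.+1 d j) =
  (cpo (fun m : {ffun 'I_r.+1 -> 'I_d.+1} => ((m ord0 : nat)%:R : rat)) (enum (symd_index r.+1 d)))`_j.
Proof.
rewrite /chern_symd -coef_map /chern_symd_t rmorph_prod /cpo big_enum /=.
apply: (congr1 (fun p : {poly rat} => p`_j)); apply: eq_bigr => m _.
rewrite rmorphD rmorph1 rmorphM /= map_polyC map_polyX /=; congr (_ + _%:P * _).
rewrite /symd_root rmorph_sum (bigD1 ord0) //= big1 ?addr0.
  by rewrite mevalZ mevalXU /v0 eqxx mulr1.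
by move=> i hi; rewrite mevalZ mevalXU /v0 (negbTE hi) mulr0.
Qed.

Lemma ps1_eq d : \sum_(m <- enum (symd_index r.+1 d)) ((m ord0 : nat)%:R : rat) ^+ 1 = Cf r.+1 w1 d.
Proof.
rewrite big_enum -symd_coef; apply: eq_bigr => m _.
by rewrite expr1 big_ord_recl /w1 /= big1 ?mulr1 // => i _.
Qed.
End Eval.


Lemma meval_segre r (v : 'I_r -> rat) (c : nat -> {mpoly rat[r]}) n :
  meval v (segre c n) = segre (fun j => meval v (c j)) n.
Proof. exact: (segre_morph (meval v)). Qed.

Lemma exact_deg r k (p : mpartition k -> {poly rat}) :
  (forall a, (size (p a) <= (r.+1 * k).+1)%N) ->
  (forall d, segre (chern_symd r.+1 d) k
       = \sum_(a : mpartition k | is_partition a) (p a).[d%:R] *: chern_lambda r.+1 a) ->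
  size (p (astar k)) = (r.+1 * k).+1.
Proof.
move=> hs hid.
have [c c0 hc] := Cf_lb r.
pose Q := (-1) ^+ k *: p (astar k).
have -> : size (p (astar k)) = size Q by rewrite size_scale // signr_eq0.
apply: (@asym Q (r.+1 * k) (c ^+ k / (k`!)%:R)).
- by apply: divr_gt0; [apply: exprn_gt0 | rewrite ltr0n fact_gt0].
- by rewrite size_scale ?signr_eq0.
move=> d.
pose yv := fun m : {ffun 'I_r.+1 -> 'I_d.+1} => ((m ord0 : nat)%:R : rat).
have eq1 : Q.[d%:R] = (-1) ^+ k * segre (fun j => (cpo yv (enum (symd_index r.+1 d)))`_j) k.
  rewrite hornerZ -(eval_sum r) -hid meval_segre; congr (_ * _).
  by apply: segre_ext => j; rewrite eval_chern_symd.
rewrite eq1.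
have [hlb _] := @newton_lb _ yv (enum (symd_index r.+1 d)) (fun m => ler0n _ _) k.
rewrite ps1_eq in hlb.
have hc' := hc d.
have hpos : 0 <= c * (d%:R) ^+ r.+1 by apply: mulr_ge0; [apply: ltW | apply: exprn_ge0].
have h2 : (c * (d%:R) ^+ r.+1) ^+ k <= Cf r.+1 w1 d ^+ k.
  by apply: lerXn2r => //; rewrite nnegrE //; apply: le_trans hc'.
rewrite exprMn -exprM in h2.
have hf : 0 < (k`!)%:R :> rat by rewrite ltr0n fact_gt0.
rewrite mulrAC ler_pdivrMr // mulrC.
rewrite [X in _ <= X]mulrC [X in X <= _]mulrC; exact: le_trans h2 hlb.
Qed.

Theorem lemma3p2 (r k : nat) (hr : (0 < r)%N) :
  exists p : mpartition k -> {poly rat},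
    (forall a : mpartition k, is_partition a -> (size (p a) <= (r * k).+1)%N) /\
    (exists a : mpartition k, [/\ is_partition a, parts_le r a & size (p a) = (r * k).+1]) /\
    (forall d : nat,
       segre (chern_symd r d) k
       = \sum_(a : mpartition k | is_partition a) (p a).[d%:R] *: chern_lambda r a).
Proof.
case: r hr => [//|r] _.
have [p [hs hid]] := exist_p r k.
exists p; split; first by move=> a _; apply: hs.
split=> //; exists (astar k); split.
- exact: astar_part.
- exact: astar_le.
- exact: exact_deg.
Qed.
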